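(* Let $(X_t)_{t\ge0}$ be a positive recurrent continuous-time Markov chain on a countable state space $E$ with semigroup $P_t$ and stationary distribution $\pi$, and assume $P_t$ is reversible with respect to $\pi$. Let $f:E\to[1,\infty)$ with $\pi(f^2)<\infty$. Then $P_t$ has exponential $f$-ergodicity if and only if the semigroup $P^f_t$ converges exponentially in the $L^2(\nu)$-norm. Moreover $\varepsilon_{\max}=\sigma_{\max}$.
   Context: $\|\mu\|_f:=\sup_{|g|\le f}|\mu(g)|=\sum_if(i)|\mu_i|$ for a signed measure $\mu$. Exponential $f$-ergodicity: there exist $\varepsilon>0$ and finite constants $C(i,f)$ with $\|P_t(i,\cdot)-\pi\|_f\le C(i,f)e^{-\varepsilon t}$ for all $i\in E,t\ge0$; $\varepsilon_{\max}$ is the supremum of such $\varepsilon$. The $h$-transform: $P_t^fg=\frac1fP_t(fg)$, $\pi^f(g)(i)=\frac1{f(i)}\sum_j\pi_jf(j)g(j)$, $\nu_i=f(i)^2\pi_i$. $P^f_t$ converges exponentially in the $L^2(\nu)$-norm if there is $\sigma>0$ with $\|P^f_tg-\pi^f(g)\|_{L^2(\nu)}\le \|g-\pi^f(g)\|_{L^2(\nu)}e^{-\sigma t}$ for all $t\ge0$, $g\in L^2(\nu)$; the largest such $\sigma$ is $\sigma_{\max}$. *)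

(* Defs.v *)
From Stdlib Require Import Reals ClassicalEpsilon.
Open Scope R_scope.

(* A countable state space E is given by an enumeration [enum : nat -> option E]
   hitting every state exactly once (finite or countably infinite E). *)
Definition enumerates {E : Type} (enum : nat -> option E) : Prop :=
  forall x : E, exists! n : nat, enum n = Some x.

Definition lift {E : Type} (enum : nat -> option E) (F : E -> R) (n : nat) : R :=
  match enum n with Some x => F x | None => 0 end.

Definition has_sum {E : Type} (enum : nat -> option E) (F : E -> R) (l : R) : Prop :=
  infinite_sum (lift enum F) l.

(* The value of a convergent series over E (used only for absolutely
   convergent series). *)
Definition ssum {E : Type} (enum : nat -> option E) (F : E -> R) : R :=
  epsilon (inhabits 0) (fun l => has_sum enum F l).

(* For a nonnegative family F: sum_{x in E} F x <= c  (in [0, +oo]). *)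
Definition sum_le {E : Type} (enum : nat -> option E) (F : E -> R) (c : R) : Prop :=
  forall N : nat, sum_f_R0 (lift enum F) N <= c.

Definition sum_finite {E : Type} (enum : nat -> option E) (F : E -> R) : Prop :=
  exists c, sum_le enum F c.

(* P : [0,oo) -> E -> E -> R is a standard honest transition function
   (the semigroup P_t of a continuous-time Markov chain on E). *)
Definition transition_function {E : Type} (enum : nat -> option E)
  (P : R -> E -> E -> R) : Prop :=
  (forall t i j, 0 <= t -> 0 <= P t i j) /\
  (forall t i, 0 <= t -> has_sum enum (P t i) 1) /\
  (forall i, P 0 i i = 1) /\
  (forall s t i k, 0 <= s -> 0 <= t ->
      has_sum enum (fun j => P s i j * P t j k) (P (s + t) i k)) /\
  (forall i eps, 0 < eps -> exists d, 0 < d /\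
      forall t, 0 < t < d -> 1 - eps < P t i i).

Definition irreducible {E : Type} (P : R -> E -> E -> R) : Prop :=
  forall t i j, 0 < t -> 0 < P t i j.

Definition stationary_distribution {E : Type} (enum : nat -> option E)
  (P : R -> E -> E -> R) (pi : E -> R) : Prop :=
  (forall i, 0 <= pi i) /\ has_sum enum pi 1 /\
  (forall t j, 0 <= t -> has_sum enum (fun i => pi i * P t i j) (pi j)).

(* Positive recurrent chain with stationary distribution pi
   (irreducible + invariant probability distribution). *)
Definition positive_recurrent {E : Type} (enum : nat -> option E)
  (P : R -> E -> E -> R) (pi : E -> R) : Prop :=
  transition_function enum P /\ irreducible P /\ stationary_distribution enum P pi.

Definition reversible {E : Type} (P : R -> E -> E -> R) (pi : E -> R) : Prop :=
  forall t i j, 0 <= t -> pi i * P t i j = pi j * P t j i.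

Definition f_ergodic_rate {E : Type} (enum : nat -> option E)
  (P : R -> E -> E -> R) (pi : E -> R) (f : E -> R) (eps : R) : Prop :=
  0 < eps /\ exists C : E -> R, forall i t, 0 <= t ->
    sum_le enum (fun j => f j * Rabs (P t i j - pi j)) (C i * exp (- eps * t)).

Definition exp_f_ergodic {E : Type} (enum : nat -> option E)
  (P : R -> E -> E -> R) (pi : E -> R) (f : E -> R) : Prop :=
  exists eps, f_ergodic_rate enum P pi f eps.

Definition nu {E : Type} (pi f : E -> R) (i : E) : R := f i ^ 2 * pi i.

Definition in_L2 {E : Type} (enum : nat -> option E) (pi f g : E -> R) : Prop :=
  sum_finite enum (fun i => nu pi f i * g i ^ 2).

Definition Pf {E : Type} (enum : nat -> option E) (P : R -> E -> E -> R)
  (f : E -> R) (t : R) (g : E -> R) (i : E) : R :=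
  / f i * ssum enum (fun j => P t i j * (f j * g j)).

Definition pif {E : Type} (enum : nat -> option E) (pi f g : E -> R) (i : E) : R :=
  / f i * ssum enum (fun j => pi j * f j * g j).

(* Exponential L^2(nu) convergence of P^f_t with rate sigma:
   ||P^f_t g - pi^f(g)||_{L2(nu)} <= ||g - pi^f(g)||_{L2(nu)} e^{-sigma t},
   written with squared norms (sums of nonnegative terms in [0,+oo]). *)
Definition L2_rate {E : Type} (enum : nat -> option E)
  (P : R -> E -> E -> R) (pi f : E -> R) (sigma : R) : Prop :=
  0 < sigma /\ forall t g, 0 <= t -> in_L2 enum pi f g ->
    forall c, sum_le enum (fun i => nu pi f i * (g i - pif enum pi f g i) ^ 2) c ->
      sum_le enum
        (fun i => nu pi f i * (Pf enum P f t g i - pif enum pi f g i) ^ 2)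
        (c * exp (- sigma * t) ^ 2).

Definition L2_exp_conv {E : Type} (enum : nat -> option E)
  (P : R -> E -> E -> R) (pi f : E -> R) : Prop :=
  exists sigma, L2_rate enum P pi f sigma.

(* Main.v *)
Require Import Defs.
From Stdlib Require Import Reals Lra Lia ZArith Classical ClassicalEpsilon.
Open Scope R_scope.

Definition fs {E : Type} (enum : nat -> option E) (n : nat) (F : E -> R) : R :=
  sum_f_R0 (lift enum F) n.

Lemma lift_ext {E} (enum : nat -> option E) F G :
  (forall x, F x = G x) -> forall n, lift enum F n = lift enum G n.
Proof. intros H n; unfold lift; destruct (enum n); auto. Qed.

Lemma fs_ext {E} (enum : nat -> option E) n F G :
  (forall x, F x = G x) -> fs enum n F = fs enum n G.
Proof. intros H; unfold fs; apply sum_eq; intros; apply lift_ext; auto. Qed.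

Lemma has_sum_ext {E} (enum : nat -> option E) F G l :
  (forall x, F x = G x) -> has_sum enum F l -> has_sum enum G l.
Proof.
  intros H HF eps Heps. destruct (HF eps Heps) as [N HN]. exists N; intros n Hn.
  rewrite <- (sum_eq (lift enum F)). apply HN; auto.
  intros; apply lift_ext; auto.
Qed.

Lemma has_sum_unique {E} (enum : nat -> option E) F l1 l2 :
  has_sum enum F l1 -> has_sum enum F l2 -> l1 = l2.
Proof. apply uniqueness_sum. Qed.

Lemma ssum_eq {E} (enum : nat -> option E) F l : has_sum enum F l -> ssum enum F = l.
Proof.
  intros H. unfold ssum. apply (has_sum_unique enum F).
  apply (epsilon_spec (inhabits 0) (fun l => has_sum enum F l)). exists l; auto. auto.
Qed.

Lemma has_sum_cv {E} (enum : nat -> option E) F l :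
  has_sum enum F l <-> Un_cv (fun n => fs enum n F) l.
Proof. unfold has_sum, fs, infinite_sum, Un_cv. tauto. Qed.

Lemma lift_plus {E} (enum : nat -> option E) F G n :
  lift enum (fun x => F x + G x) n = lift enum F n + lift enum G n.
Proof. unfold lift; destruct (enum n); lra. Qed.
Lemma lift_scal {E} (enum : nat -> option E) c F n :
  lift enum (fun x => c * F x) n = c * lift enum F n.
Proof. unfold lift; destruct (enum n); lra. Qed.

Lemma fs_plus {E} (enum : nat -> option E) n F G :
  fs enum n (fun x => F x + G x) = fs enum n F + fs enum n G.
Proof. unfold fs. rewrite <- plus_sum. apply sum_eq; intros; apply lift_plus. Qed.
Lemma fs_scal {E} (enum : nat -> option E) n c F :
  fs enum n (fun x => c * F x) = c * fs enum n F.
Proof. unfold fs. rewrite scal_sum. apply sum_eq; intros; rewrite lift_scal; lra. Qed.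
Lemma fs_le {E} (enum : nat -> option E) n F G :
  (forall x, F x <= G x) -> fs enum n F <= fs enum n G.
Proof. intros H; unfold fs; apply sum_Rle; intros; unfold lift; destruct (enum n0); [apply H|lra]. Qed.
Lemma fs_nonneg {E} (enum : nat -> option E) n F :
  (forall x, 0 <= F x) -> 0 <= fs enum n F.
Proof. intros H. apply cond_pos_sum. intros; unfold lift; destruct (enum n0); auto; lra. Qed.

Lemma fs_abs {E} (enum : nat -> option E) n F :
  Rabs (fs enum n F) <= fs enum n (fun x => Rabs (F x)).
Proof. unfold fs. eapply Rle_trans. apply sum_f_R0_triangle.
  apply sum_Rle; intros; unfold lift; destruct (enum n0); try lra. rewrite Rabs_R0; lra. Qed.

Lemma CV_const (c : R) : Un_cv (fun _ => c) c.
Proof. intros eps He; exists O; intros; unfold Rdist; rewrite Rminus_diag, Rabs_R0; lra. Qed.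

Lemma has_sum_plus {E} (enum : nat -> option E) F G a b :
  has_sum enum F a -> has_sum enum G b -> has_sum enum (fun x => F x + G x) (a + b).
Proof.
  rewrite !has_sum_cv. intros HF HG.
  eapply Un_cv_ext. 2: apply (CV_plus _ _ _ _ HF HG). intros n; simpl. rewrite fs_plus; auto.
Qed.
Lemma has_sum_scal {E} (enum : nat -> option E) c F a :
  has_sum enum F a -> has_sum enum (fun x => c * F x) (c * a).
Proof.
  rewrite !has_sum_cv. intros HF.
  eapply Un_cv_ext. 2: apply (CV_mult _ _ _ _ (CV_const c) HF). intros n; simpl. rewrite fs_scal; auto.
Qed.

Lemma has_sum_minus {E} (enum : nat -> option E) F G a b :
  has_sum enum F a -> has_sum enum G b -> has_sum enum (fun x => F x - G x) (a - b).
Proof.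
  intros HF HG. apply has_sum_scal with (c := -1) in HG.
  eapply has_sum_ext. 2: { replace (a - b) with (a + -1 * b) by ring. apply has_sum_plus; eauto. }
  intros; simpl; ring.
Qed.

Lemma has_sum_le {E} (enum : nat -> option E) F G a b :
  (forall x, F x <= G x) -> has_sum enum F a -> has_sum enum G b -> a <= b.
Proof.
  rewrite !has_sum_cv. intros H HF HG. eapply Rle_cv_lim; eauto. intros; apply fs_le; auto.
Qed.

Lemma has_sum_zero {E} (enum : nat -> option E) : has_sum enum (fun _ => 0) 0.
Proof. rewrite has_sum_cv. eapply Un_cv_ext. 2: apply (CV_const 0). intros n.
  unfold fs. induction n; simpl; unfold lift in *; [destruct (enum O)|destruct (enum (S n))]; lra. Qed.

Lemma has_sum_nonneg {E} (enum : nat -> option E) F a :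
  (forall x, 0 <= F x) -> has_sum enum F a -> 0 <= a.
Proof. intros H HF. eapply has_sum_le. 2: apply has_sum_zero. 2: exact HF. auto. Qed.

Lemma partial_le {E} (enum : nat -> option E) F l n :
  (forall x, 0 <= F x) -> has_sum enum F l -> fs enum n F <= l.
Proof.
  intros H HF. apply sum_incr. apply HF. intros k; unfold lift; destruct (enum k); auto; lra.
Qed.

Lemma sum_le_lim {E} (enum : nat -> option E) F l c :
  has_sum enum F l -> sum_le enum F c -> l <= c.
Proof.
  rewrite has_sum_cv. intros HF Hc. eapply Rle_cv_lim. 2: exact HF. 2: apply CV_const.
  intros n; apply Hc.
Qed.

Lemma bounded_conv {E} (enum : nat -> option E) F c :
  (forall x, 0 <= F x) -> sum_le enum F c -> exists l, has_sum enum F l.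
Proof.
  intros H Hc. destruct (growing_cv (fun n => fs enum n F)) as [l Hl].
  - intros n. unfold fs. simpl. assert (0 <= lift enum F (S n)) by (unfold lift; destruct (enum (S n)); auto; lra). lra.
  - exists c. intros x [n ->]. apply Hc.
  - exists l. apply has_sum_cv; auto.
Qed.

Lemma series_pos_conv (a b : nat -> R) L :
  (forall n, 0 <= a n <= b n) -> Un_cv (sum_f_R0 b) L -> exists l, Un_cv (sum_f_R0 a) l.
Proof.
  intros H Hb. destruct (Rseries_CV_comp a b H (exist _ L Hb)) as [l Hl]. exists l; auto.
Qed.

Lemma dominated_conv {E} (enum : nat -> option E) F G L :
  (forall x, Rabs (F x) <= G x) -> has_sum enum G L -> exists l, has_sum enum F l.
Proof.
  intros H HG.
  destruct (series_pos_conv (lift enum (fun x => (Rabs (F x) + F x) / 2)) (lift enum G) L) as [l1 H1].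
  { intros n; unfold lift; destruct (enum n). specialize (H e). split.
    - pose proof (Rle_abs (- F e)). rewrite Rabs_Ropp in H0. lra.
    - pose proof (Rle_abs (F e)). lra.
    - lra. }
  { apply HG. }
  destruct (series_pos_conv (lift enum (fun x => (Rabs (F x) - F x) / 2)) (lift enum G) L) as [l2 H2].
  { intros n; unfold lift; destruct (enum n). specialize (H e). split.
    - pose proof (Rle_abs (F e)). lra.
    - pose proof (Rle_abs (- F e)). rewrite Rabs_Ropp in H0. lra.
    - lra. }
  { apply HG. }
  exists (l1 - l2). eapply has_sum_ext. 2: apply has_sum_minus; [exact H1 | exact H2].
  intros x; simpl; field.
Qed.

Definition idx_ok {E} (enum : nat -> option E) (idx : E -> nat) : Prop :=
  (forall x, enum (idx x) = Some x) /\ (forall k x, enum k = Some x -> k = idx x).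

Lemma idx_exists {E} (enum : nat -> option E) : enumerates enum -> exists idx, idx_ok enum idx.
Proof.
  intros H.
  exists (fun x => proj1_sig (constructive_indefinite_description _ (H x))).
  split.
  - intros x. destruct (constructive_indefinite_description _ (H x)) as [n [Hn Hu]]; simpl; auto.
  - intros k x Hk. destruct (constructive_indefinite_description _ (H x)) as [n [Hn Hu]]; simpl.
    symmetry; apply Hu; auto.
Qed.

Lemma term_le_sum (a : nat -> R) k : (forall n, 0 <= a n) -> a k <= sum_f_R0 a k.
Proof.
  intros H. destruct k. simpl; lra. simpl. pose proof (cond_pos_sum a k H). lra.
Qed.

Lemma term_le_fs {E} (enum : nat -> option E) idx F x :
  idx_ok enum idx -> (forall y, 0 <= F y) -> F x <= fs enum (idx x) F.
Proof.
  intros [H1 H2] H. unfold fs.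
  replace (F x) with (lift enum F (idx x)) by (unfold lift; rewrite H1; auto).
  apply term_le_sum. intros n; unfold lift; destruct (enum n); auto; lra.
Qed.

Lemma term_le_has_sum {E} (enum : nat -> option E) idx F x l :
  idx_ok enum idx -> (forall y, 0 <= F y) -> has_sum enum F l -> F x <= l.
Proof. intros. eapply Rle_trans. apply term_le_fs; eauto. apply partial_le; auto. Qed.

Lemma has_sum_finsum {E} (enum : nat -> option E) (A : nat -> E -> R) (a : nat -> R) n :
  (forall k, has_sum enum (A k) (a k)) ->
  has_sum enum (fun x => sum_f_R0 (fun k => A k x) n) (sum_f_R0 a n).
Proof.
  intros H. induction n; simpl.
  - apply H.
  - apply has_sum_plus; auto.
Qed.

Lemma eventually_const (u : nat -> R) n : (forall k, (n <= k)%nat -> u k = u n) -> Un_cv u (u n).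
Proof. intros H eps He. exists n. intros k Hk. rewrite H; auto. unfold Rdist; rewrite Rminus_diag, Rabs_R0; lra. Qed.

Lemma has_sum_eventually_zero {E} (enum : nat -> option E) F n :
  (forall k, (n < k)%nat -> lift enum F k = 0) -> has_sum enum F (fs enum n F).
Proof.
  intros H. apply has_sum_cv. apply eventually_const.
  intros k Hk. induction Hk. auto. unfold fs in *; simpl. rewrite IHHk, H. ring. lia.
Qed.

Fixpoint sq_iter (a : R) (n : nat) : R := match n with O => a | S n => sq_iter a n ^ 2 end.
Fixpoint dbl (t : R) (n : nat) : R := match n with O => t | S n => dbl t n + dbl t n end.

Lemma dbl_nonneg t n : 0 <= t -> 0 <= dbl t n.
Proof. intros; induction n; simpl; lra. Qed.

Lemma sq_iter_grow a n : 1 <= a -> a <= sq_iter a n /\ 1 + INR n * (a - 1) <= sq_iter a n.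
Proof.
  intros Ha. induction n. simpl; lra.
  destruct IHn as [H1 H2]. replace (INR (S n)) with (INR n + 1) by (rewrite S_INR; auto).
  simpl sq_iter. split; nra.
Qed.

Lemma iterate (q : R -> R) (A K eps t : R) :
  0 <= A -> 0 <= t ->
  (forall s, 0 <= s -> 0 <= q s) ->
  (forall s, 0 <= s -> q s ^ 2 <= A * q (s + s)) ->
  (forall s, 0 <= s -> q s <= K * exp (- eps * (s + s))) ->
  q t <= A * exp (- eps * (t + t)).
Proof.
  intros HA Ht Hq Hsq HK.
  destruct (Req_dec A 0) as [H0|HA'].
  { subst. specialize (Hsq t Ht). specialize (Hq t Ht). nra. }
  assert (HAp : 0 < A) by lra.
  set (a := fun s => q s * exp (eps * (s + s)) / A).
  assert (Ha2 : forall s, 0 <= s -> a s ^ 2 <= a (s + s)).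
  { intros s Hs. unfold a.
    assert (E1 : exp (eps * (s + s)) ^ 2 = exp (eps * ((s + s) + (s + s)))).
    { simpl. rewrite Rmult_1_r, <- exp_plus. f_equal. ring. }
    specialize (Hsq s Hs). pose proof (exp_pos (eps * ((s+s)+(s+s)))).
    replace ((q s * exp (eps * (s + s)) / A) ^ 2) with (q s ^ 2 * exp (eps * (s + s)) ^ 2 / (A * A)) by (field; lra).
    rewrite E1. apply Rmult_le_reg_r with (A * A). nra.
    replace (q s ^ 2 * exp (eps * (s + s + (s + s))) / (A * A) * (A * A)) with (q s ^ 2 * exp (eps * (s + s + (s + s)))) by (field; lra).
    replace (q (s + s) * exp (eps * (s + s + (s + s))) / A * (A * A)) with (A * q (s + s) * exp (eps * (s + s + (s + s)))) by (field; lra).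
    nra. }
  assert (Hab : forall s, 0 <= s -> a s <= K / A).
  { intros s Hs. unfold a. specialize (HK s Hs).
    assert (EE : exp (- eps * (s + s)) * exp (eps * (s + s)) = 1).
    { rewrite <- exp_plus. replace (- eps * (s + s) + eps * (s + s)) with 0 by ring. apply exp_0. }
    pose proof (exp_pos (eps * (s + s))).
    assert (q s * exp (eps * (s + s)) <= K).
    { apply Rmult_le_compat_r with (r := exp (eps * (s + s))) in HK; [|lra].
      rewrite Rmult_assoc, EE, Rmult_1_r in HK. exact HK. }
    unfold Rdiv. apply Rmult_le_compat_r; auto. left; apply Rinv_0_lt_compat; auto. }
  assert (Hanonneg : forall s, 0 <= s -> 0 <= a s).
  { intros s Hs. unfold a. apply Rmult_le_pos. apply Rmult_le_pos; auto. left; apply exp_pos.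
    left; apply Rinv_0_lt_compat; auto. }
  assert (Hit : forall n, sq_iter (a t) n <= a (dbl t n)).
  { induction n; simpl. lra.
    pose proof (dbl_nonneg t n Ht). eapply Rle_trans. 2: apply Ha2; auto.
    assert (0 <= sq_iter (a t) n).
    { destruct n; simpl. apply Hanonneg; auto. apply pow2_ge_0. }
    nra. }
  assert (Hat : a t <= 1).
  { destruct (Rle_dec (a t) 1) as [|Hgt]; auto. exfalso.
    assert (Hg : 1 < a t) by lra.
    destruct (archimed ((K / A) / (a t - 1))) as [Harch _].
    destruct (Z.le_gt_cases 0 (up ((K / A) / (a t - 1)))) as [Hz|Hz].
    - set (n := Z.to_nat (up ((K / A) / (a t - 1)))).
      assert (INR n = IZR (up ((K / A) / (a t - 1)))). { unfold n. rewrite INR_IZR_INZ, Z2Nat.id; auto. }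
      destruct (sq_iter_grow (a t) n) as [_ Hg2]; try lra.
      specialize (Hit n). specialize (Hab (dbl t n) (dbl_nonneg t n Ht)).
      assert (INR n * (a t - 1) > K / A).
      { apply Rmult_gt_compat_r with (r := a t - 1) in Harch. 2: lra.
        assert (K / A / (a t - 1) * (a t - 1) = K / A) by (field; lra). rewrite H. lra. }
      lra.
    - apply IZR_lt in Hz. assert (K / A / (a t - 1) < 0) by lra.
      specialize (Hab t Ht).
      assert (K / A < 0).
      { unfold Rdiv at 2 in H. destruct (Rle_dec 0 (K/A)); auto.
        assert (0 <= K / A * / (a t - 1)). apply Rmult_le_pos; auto. left; apply Rinv_0_lt_compat; lra. lra. lra. }
      lra. }
  unfold a in Hat. apply Rmult_le_compat_r with (r := A) in Hat; [|lra].
  unfold Rdiv in Hat. rewrite Rmult_assoc, Rinv_l, Rmult_1_r, Rmult_1_l in Hat by lra.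
  apply Rmult_le_compat_r with (r := exp (- eps * (t + t))) in Hat. 2: left; apply exp_pos.
  rewrite Rmult_assoc, <- exp_plus in Hat. replace (eps * (t + t) + - eps * (t + t)) with 0 in Hat by ring.
  rewrite exp_0 in Hat. lra.
Qed.

Lemma fs_minus {E} (enum : nat -> option E) n F G :
  fs enum n (fun x => F x - G x) = fs enum n F - fs enum n G.
Proof.
  replace (fs enum n F - fs enum n G) with (fs enum n F + (-1) * fs enum n G) by ring.
  rewrite <- fs_scal, <- fs_plus. apply fs_ext; intros; ring.
Qed.

Lemma fs_mult {E} (enum : nat -> option E) n F G :
  fs enum n F * fs enum n G = fs enum n (fun j => fs enum n (fun k => F j * G k)).
Proof.
  rewrite (Rmult_comm (fs enum n F)), <- (fs_scal enum n (fs enum n G) F). apply fs_ext; intros x.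
  rewrite Rmult_comm, <- (fs_scal enum n (F x) G). reflexivity.
Qed.

Lemma has_sum_fs {E} (enum : nat -> option E) n (A : E -> E -> R) (a : E -> R) :
  (forall j, has_sum enum (A j) (a j)) ->
  has_sum enum (fun x => fs enum n (fun j => A j x)) (fs enum n a).
Proof.
  intros H. unfold fs.
  apply (has_sum_finsum enum (fun k x => lift enum (fun j => A j x) k) (lift enum a) n).
  intros k. unfold lift. destruct (enum k). apply H. apply has_sum_zero.
Qed.

Definition tr {E} (idx : E -> nat) (n : nat) (F : E -> R) (i : E) : R :=
  if (idx i <=? n)%nat then F i else 0.

Lemma has_sum_tr {E} (enum : nat -> option E) idx n F :
  idx_ok enum idx -> has_sum enum (tr idx n F) (fs enum n F).
Proof.
  intros [H1 H2].
  replace (fs enum n F) with (fs enum n (tr idx n F)).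
  - apply has_sum_eventually_zero. intros k Hk. unfold lift, tr.
    destruct (enum k) eqn:Ek; auto. rewrite <- (H2 k e Ek).
    destruct (Nat.leb_spec k n); auto; lia.
  - unfold fs. apply sum_eq. intros k Hk. unfold lift, tr.
    destruct (enum k) eqn:Ek; auto. rewrite <- (H2 k e Ek).
    destruct (Nat.leb_spec k n); auto; lia.
Qed.

Lemma tr_mult {E} (idx : E -> nat) n F G i : tr idx n F i * G i = tr idx n (fun x => F x * G x) i.
Proof. unfold tr. destruct (idx i <=? n)%nat; ring. Qed.

Lemma cs_real x A B :
  0 <= A -> 0 <= B ->
  (forall l, 0 < l -> x <= (l * A + B / l) / 2 /\ - x <= (l * A + B / l) / 2) ->
  x ^ 2 <= A * B.
Proof.
  intros HA HB H.
  set (y := Rabs x).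
  assert (Hy : forall l, 0 < l -> y <= (l * A + B / l) / 2).
  { intros l Hl. unfold y. destruct (H l Hl). unfold Rabs; destruct (Rcase_abs x); lra. }
  assert (Ex : x ^ 2 = y ^ 2) by (unfold y; rewrite <- (pow2_abs x); auto).
  rewrite Ex. assert (0 <= y) by apply Rabs_pos.
  destruct (Req_dec y 0) as [Hy0|Hy0]. { rewrite Hy0. nra. }
  destruct (Req_dec A 0) as [HA0|HA0].
  - exfalso. subst A. specialize (Hy ((B + 1) / y)).
    assert (0 < (B + 1) / y) by (apply Rdiv_lt_0_compat; lra).
    specialize (Hy H1). replace (B / ((B + 1) / y)) with (B * y / (B + 1)) in Hy by (field; lra).
    assert (B * y / (B + 1) < y * 2).
    { apply Rmult_lt_reg_r with (B + 1). lra. unfold Rdiv. rewrite Rmult_assoc, Rinv_l by lra. nra. }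
    lra.
  - specialize (Hy (y / A)). assert (0 < y / A) by (apply Rdiv_lt_0_compat; lra).
    specialize (Hy H1). replace (y / A * A) with y in Hy by (field; lra).
    replace (B / (y / A)) with (B * A / y) in Hy by (field; lra).
    assert (y <= B * A / y) by lra.
    apply Rmult_le_compat_r with (r := y) in H2; [|lra].
    replace (B * A / y * y) with (B * A) in H2 by (field; lra). nra.
Qed.

Lemma cauchy_schwarz {E} (enum : nat -> option E) (pi a b : E -> R) x A B :
  (forall i, 0 <= pi i) ->
  has_sum enum (fun i => pi i * a i * b i) x ->
  has_sum enum (fun i => pi i * a i ^ 2) A ->
  has_sum enum (fun i => pi i * b i ^ 2) B -> x ^ 2 <= A * B.
Proof.
  intros Hpi Hx HA HB. apply cs_real.
  - eapply has_sum_nonneg. 2: exact HA. intros; apply Rmult_le_pos; auto; apply pow2_ge_0.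
  - eapply has_sum_nonneg. 2: exact HB. intros; apply Rmult_le_pos; auto; apply pow2_ge_0.
  - intros l Hl.
    assert (HS : has_sum enum (fun i => (l * (pi i * a i ^ 2) + / l * (pi i * b i ^ 2)) / 2) (/ 2 * (l * A + / l * B))).
    { eapply has_sum_ext. 2: { apply has_sum_scal with (c := /2). apply has_sum_plus.
        apply has_sum_scal; exact HA. apply has_sum_scal; exact HB. }
      intros; simpl. field. all: lra. }
    replace ((l * A + B / l) / 2) with (/ 2 * (l * A + / l * B)) by (field; lra).
    split.
    + eapply has_sum_le. 2: exact Hx. 2: exact HS. intros i; cbv beta.
      specialize (Hpi i). assert (0 <= pi i * (l * a i - b i) ^ 2) by (apply Rmult_le_pos; auto; apply pow2_ge_0).
      apply Rmult_le_reg_r with (2 * l). lra.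
      replace ((l * (pi i * a i ^ 2) + / l * (pi i * b i ^ 2)) / 2 * (2 * l)) with (l * l * (pi i * a i ^ 2) + pi i * b i ^ 2) by (field; lra).
      nra.
    + replace (- x) with (-1 * x) by ring. eapply has_sum_le. 2: apply has_sum_scal with (c := -1); exact Hx. 2: exact HS. intros i; cbv beta.
      specialize (Hpi i). assert (0 <= pi i * (l * a i + b i) ^ 2) by (apply Rmult_le_pos; auto; apply pow2_ge_0).
      apply Rmult_le_reg_r with (2 * l). lra.
      replace ((l * (pi i * a i ^ 2) + / l * (pi i * b i ^ 2)) / 2 * (2 * l)) with (l * l * (pi i * a i ^ 2) + pi i * b i ^ 2) by (field; lra).
      nra.
Qed.

Definition mm {E} (enum : nat -> option E) (pi : E -> R) n (h : E -> R) :=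
  fs enum n (fun j => pi j * h j).
Definition WW {E} (enum : nat -> option E) (P : R -> E -> E -> R) n (h : E -> R) s i :=
  fs enum n (fun j => P s i j * h j).
Definition S1 {E} (enum : nat -> option E) (P : R -> E -> E -> R) (pi : E -> R) n (h : E -> R) r :=
  fs enum n (fun j => fs enum n (fun k => h j * h k * pi j * P r j k)).
Definition DD {E} (enum : nat -> option E) (P : R -> E -> E -> R) (pi : E -> R) n (h : E -> R) r :=
  S1 enum P pi n h r - mm enum pi n h ^ 2.

Lemma pW_sum {E} (enum : nat -> option E) P pi n h s :
  (forall t j, 0 <= t -> has_sum enum (fun i => pi i * P t i j) (pi j)) -> 0 <= s ->
  has_sum enum (fun i => pi i * WW enum P n h s i) (mm enum pi n h).
Proof.
  intros Hst Hs.
  eapply has_sum_ext with (F := fun i => fs enum n (fun j => h j * (pi i * P s i j))).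
  { intros i. unfold WW. rewrite <- fs_scal. apply fs_ext; intros; ring. }
  unfold mm. replace (fs enum n (fun j => pi j * h j)) with (fs enum n (fun j => h j * pi j)) by (apply fs_ext; intros; ring).
  apply (has_sum_fs enum n (fun j i => h j * (pi i * P s i j))). intros j.
  apply has_sum_scal. apply Hst; auto.
Qed.

Lemma Id1 {E} (enum : nat -> option E) P pi n h t :
  (forall s t i k, 0 <= s -> 0 <= t ->
      has_sum enum (fun j => P s i j * P t j k) (P (s + t) i k)) ->
  (forall t j, 0 <= t -> has_sum enum (fun i => pi i * P t i j) (pi j)) ->
  has_sum enum pi 1 -> reversible P pi -> 0 <= t ->
  has_sum enum (fun i => pi i * (WW enum P n h t i - mm enum pi n h) ^ 2) (DD enum P pi n h (t + t)).
Proof.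
  intros HCK Hst Hpi Hrev Ht. set (m := mm enum pi n h).
  assert (H1 : has_sum enum (fun i => pi i * WW enum P n h t i ^ 2) (S1 enum P pi n h (t + t))).
  { eapply has_sum_ext with (F := fun i => fs enum n (fun j => fs enum n (fun k =>
        h j * h k * (pi j * (P t j i * P t i k))))).
    { intros i. unfold WW. rewrite <- Rsqr_pow2. unfold Rsqr. rewrite fs_mult, <- fs_scal.
      apply fs_ext; intros j. rewrite <- fs_scal. apply fs_ext; intros k.
      replace (pi j * (P t j i * P t i k)) with ((pi j * P t j i) * P t i k) by ring.
      rewrite <- (Hrev t i j Ht). ring. }
    unfold S1. apply (has_sum_fs enum n (fun j i => fs enum n (fun k => h j * h k * (pi j * (P t j i * P t i k))))).
    intros j. apply (has_sum_fs enum n (fun k i => h j * h k * (pi j * (P t j i * P t i k)))).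
    intros k. replace (h j * h k * pi j * P (t + t) j k) with (h j * h k * (pi j * P (t + t) j k)) by ring.
    apply has_sum_scal, has_sum_scal. apply HCK; auto. }
  pose proof (pW_sum enum P pi n h t Hst Ht) as H2.
  replace (DD enum P pi n h (t + t)) with (S1 enum P pi n h (t + t) - 2 * m * m + m ^ 2 * 1)
    by (unfold DD; fold m; ring).
  eapply has_sum_ext. 2: { apply has_sum_plus. apply has_sum_minus. exact H1. apply has_sum_scal with (c := 2 * m). exact H2.
                       apply has_sum_scal with (c := m ^ 2). exact Hpi. }
  intros i; cbv beta. ring.
Qed.

Lemma Id2 {E} (enum : nat -> option E) idx P pi n h s :
  idx_ok enum idx ->
  (forall t j, 0 <= t -> has_sum enum (fun i => pi i * P t i j) (pi j)) ->
  has_sum enum pi 1 -> 0 <= s ->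
  has_sum enum (fun i => pi i * (tr idx n h i - mm enum pi n h) * (WW enum P n h s i - mm enum pi n h))
    (DD enum P pi n h s).
Proof.
  intros Hidx Hst Hpi Hs. set (m := mm enum pi n h).
  assert (HA : has_sum enum (tr idx n (fun x => pi x * h x * WW enum P n h s x)) (S1 enum P pi n h s)).
  { replace (S1 enum P pi n h s) with (fs enum n (fun x => pi x * h x * WW enum P n h s x)).
    apply has_sum_tr; auto. unfold S1, WW. apply fs_ext; intros x. rewrite <- fs_scal. apply fs_ext; intros; ring. }
  assert (HB : has_sum enum (tr idx n (fun x => pi x * h x)) m) by (apply has_sum_tr; auto).
  pose proof (pW_sum enum P pi n h s Hst Hs) as HC.
  replace (DD enum P pi n h s) with (S1 enum P pi n h s - m * m - m * m + m ^ 2 * 1)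
    by (unfold DD; fold m; ring).
  eapply has_sum_ext. 2: { apply has_sum_plus. apply has_sum_minus. apply has_sum_minus. exact HA.
    apply has_sum_scal with (c := m); exact HB. apply has_sum_scal with (c := m); exact HC.
    apply has_sum_scal with (c := m ^ 2); exact Hpi. }
  intros i; cbv beta. fold m. unfold tr. destruct (idx i <=? n)%nat; ring.
Qed.

Lemma D0id {E} (enum : nat -> option E) idx pi n h :
  idx_ok enum idx -> has_sum enum pi 1 ->
  has_sum enum (fun i => pi i * (tr idx n h i - mm enum pi n h) ^ 2)
    (fs enum n (fun i => pi i * h i ^ 2) - mm enum pi n h ^ 2).
Proof.
  intros Hidx Hpi. set (m := mm enum pi n h).
  assert (HA : has_sum enum (tr idx n (fun x => pi x * h x ^ 2)) (fs enum n (fun i => pi i * h i ^ 2))) by (apply has_sum_tr; auto).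
  assert (HB : has_sum enum (tr idx n (fun x => pi x * h x)) m) by (apply has_sum_tr; auto).
  replace (fs enum n (fun i => pi i * h i ^ 2) - m ^ 2) with (fs enum n (fun i => pi i * h i ^ 2) - 2 * m * m + m ^ 2 * 1) by ring.
  eapply has_sum_ext. 2: { apply has_sum_plus. apply has_sum_minus. exact HA.
    apply has_sum_scal with (c := 2 * m); exact HB. apply has_sum_scal with (c := m ^ 2); exact Hpi. }
  intros i; cbv beta. fold m. unfold tr. destruct (idx i <=? n)%nat; ring.
Qed.

Lemma Dbound {E} (enum : nat -> option E) idx P pi f C eps n h :
  idx_ok enum idx -> (forall i, 1 <= f i) -> (forall i, 0 <= pi i) ->
  (forall j r, 0 <= r -> sum_le enum (fun k => f k * Rabs (P r j k - pi k)) (C j * exp (- eps * r))) ->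
  forall r, 0 <= r ->
  DD enum P pi n h r <= fs enum n (fun j => Rabs (h j) * pi j * fs enum n (fun k => Rabs (h k)) * C j) * exp (- eps * r).
Proof.
  intros Hidx Hf Hpi HC r Hr.
  assert (E1 : DD enum P pi n h r = fs enum n (fun j => fs enum n (fun k => h j * h k * pi j * (P r j k - pi k)))).
  { unfold DD, S1, mm. replace ((fs enum n (fun j : E => pi j * h j)) ^ 2)
      with (fs enum n (fun j : E => pi j * h j) * fs enum n (fun j : E => pi j * h j)) by ring.
    rewrite fs_mult, <- fs_minus. apply fs_ext; intros j. rewrite <- fs_minus. apply fs_ext; intros k. ring. }
  rewrite E1. eapply Rle_trans. apply Rle_abs. eapply Rle_trans. apply fs_abs.
  eapply Rle_trans. apply fs_le. intros j. apply fs_abs.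
  rewrite Rmult_comm, <- fs_scal. apply fs_le. intros j.
  replace (exp (- eps * r) * (Rabs (h j) * pi j * fs enum n (fun k : E => Rabs (h k)) * C j))
    with ((Rabs (h j) * pi j * C j * exp (- eps * r)) * fs enum n (fun k : E => Rabs (h k))) by ring.
  rewrite <- fs_scal. apply fs_le. intros k.
  assert (Hd : Rabs (P r j k - pi k) <= C j * exp (- eps * r)).
  { eapply Rle_trans. 2: apply (HC j r Hr (idx k)).
    eapply Rle_trans. 2: apply (term_le_fs enum idx (fun k => f k * Rabs (P r j k - pi k)) k Hidx).
    - specialize (Hf k). pose proof (Rabs_pos (P r j k - pi k)). nra.
    - intros y. specialize (Hf y). pose proof (Rabs_pos (P r j y - pi y)). nra. }
  rewrite !Rabs_mult, (Rabs_right (pi j)) by (apply Rle_ge; auto).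
  pose proof (Rabs_pos (h j)). pose proof (Rabs_pos (h k)). specialize (Hpi j).
  assert (0 <= Rabs (h j) * Rabs (h k) * pi j) by (apply Rmult_le_pos; auto; apply Rmult_le_pos; auto).
  apply Rmult_le_compat_l with (r := Rabs (h j) * Rabs (h k) * pi j) in Hd; auto.
  lra.
Qed.

Lemma step_finite {E} (enum : nat -> option E) idx P pi f C eps n h t N :
  idx_ok enum idx ->
  (forall s t i k, 0 <= s -> 0 <= t ->
      has_sum enum (fun j => P s i j * P t j k) (P (s + t) i k)) ->
  (forall t j, 0 <= t -> has_sum enum (fun i => pi i * P t i j) (pi j)) ->
  has_sum enum pi 1 -> reversible P pi -> (forall i, 0 <= pi i) ->
  (forall i, 1 <= f i) ->
  (forall j r, 0 <= r -> sum_le enum (fun k => f k * Rabs (P r j k - pi k)) (C j * exp (- eps * r))) ->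
  0 <= t ->
  fs enum N (fun i => pi i * (WW enum P n h t i - mm enum pi n h) ^ 2)
  <= (fs enum n (fun i => pi i * h i ^ 2) - mm enum pi n h ^ 2) * exp (- eps * (t + t)).
Proof.
  intros Hidx HCK Hst Hpi Hrev Hpos Hf HC Ht.
  eapply Rle_trans. apply partial_le. 2: apply Id1; eauto.
  { intros; apply Rmult_le_pos; auto; apply pow2_ge_0. }
  apply (iterate (fun s => DD enum P pi n h (s + s)) _
     (fs enum n (fun j => Rabs (h j) * pi j * fs enum n (fun k => Rabs (h k)) * C j)) eps t); auto.
  - eapply has_sum_nonneg. 2: apply D0id; eauto. intros; apply Rmult_le_pos; auto; apply pow2_ge_0.
  - intros s Hs. eapply has_sum_nonneg. 2: apply Id1; eauto. intros; apply Rmult_le_pos; auto; apply pow2_ge_0.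
  - intros s Hs. eapply cauchy_schwarz; auto.
    + apply Id2; eauto. lra.
    + apply D0id; eauto.
    + apply Id1; eauto. lra.
  - intros s Hs. apply Dbound with (idx := idx) (f := f); auto. lra.
Qed.

Lemma fs_cv {E} (enum : nat -> option E) N (u : nat -> E -> R) (U : E -> R) :
  (forall x, Un_cv (fun n => u n x) (U x)) -> Un_cv (fun n => fs enum N (u n)) (fs enum N U).
Proof.
  intros H. unfold fs. induction N; simpl.
  - unfold lift. destruct (enum O). apply H. apply CV_const.
  - apply CV_plus. apply IHN. unfold lift. destruct (enum (S N)). apply H. apply CV_const.
Qed.

Lemma pi_pos {E} (enum : nat -> option E) idx P pi :
  idx_ok enum idx -> irreducible P -> stationary_distribution enum P pi -> forall i, 0 < pi i.
Proof.
  intros Hidx Hirr [Hnn [H1 Hst]] i.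
  destruct (classic (exists k, 0 < pi k)) as [[k Hk]|Hno].
  - pose proof (Hst 1 i ltac:(lra)) as Hs.
    eapply Rlt_le_trans. 2: eapply (term_le_has_sum enum idx _ k _ Hidx); [|exact Hs].
    + apply Rmult_lt_0_compat; auto. apply Hirr; lra.
    + intros y; apply Rmult_le_pos; auto. apply (Rlt_le _ _ (Hirr 1 y i ltac:(lra))).
  - exfalso. assert (forall k, pi k = 0). { intros k. destruct (Hnn k); auto. exfalso; apply Hno; eauto. }
    assert (has_sum enum pi 0) by (eapply has_sum_ext; [|apply has_sum_zero]; intros; simpl; auto).
    pose proof (has_sum_unique enum pi _ _ H1 H0). lra.
Qed.

Lemma has_sum_val {E} (enum : nat -> option E) F a b : has_sum enum F a -> a = b -> has_sum enum F b.
Proof. intros H ->; auto. Qed.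

Lemma erg_to_L2 {E} (enum : nat -> option E) idx P pi f eps :
  idx_ok enum idx -> positive_recurrent enum P pi -> reversible P pi -> (forall i, 1 <= f i) ->
  f_ergodic_rate enum P pi f eps -> L2_rate enum P pi f eps.
Proof.
  intros Hidx Hpr Hrev Hf [Heps [C HC]].
  assert (Hpp : forall i, 0 < pi i) by (apply (pi_pos enum idx P pi Hidx); apply Hpr).
  destruct Hpr as [[Hnn [Hrow [_ [HCK _]]]] [Hirr [Hpinn [Hpi1 Hst]]]].
  split; auto. intros t g Ht HL2 c Hc N.
  set (h := fun i => f i * g i).
  assert (Hfne : forall i, f i <> 0) by (intros i; specialize (Hf i); lra).
  destruct HL2 as [c2 Hc2].
  destruct (bounded_conv enum _ c2 (fun i => Rmult_le_pos _ _ (Rmult_le_pos _ _ (pow2_ge_0 (f i)) (Hpinn i)) (pow2_ge_0 (g i))) Hc2) as [S2 HS2'].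
  assert (HS2 : has_sum enum (fun i => pi i * h i ^ 2) S2).
  { eapply has_sum_ext. 2: exact HS2'. intros i; unfold nu, h; simpl; ring. }
  assert (Hdom : forall x, Rabs x <= (1 + x ^ 2) / 2).
  { intros x. pose proof (pow2_ge_0 (x - 1)). pose proof (pow2_ge_0 (x + 1)). unfold Rabs; destruct (Rcase_abs x); nra. }
  destruct (dominated_conv enum (fun j => pi j * h j) (fun j => (pi j + pi j * h j ^ 2) / 2) ((1 + S2) / 2)) as [m Hm].
  { intros x. rewrite Rabs_mult, (Rabs_right (pi x)) by (apply Rle_ge; auto).
    replace ((pi x + pi x * h x ^ 2) / 2) with (pi x * ((1 + h x ^ 2) / 2)) by field.
    apply Rmult_le_compat_l; auto. }
  { eapply has_sum_val. eapply has_sum_ext. 2: apply has_sum_scal with (c := /2); apply has_sum_plus; [exact Hpi1|exact HS2].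
    intros; simpl; field. field. }
  assert (HG : has_sum enum (fun j => (pi j + pi j * h j ^ 2) / 2) ((1 + S2) / 2)).
  { eapply has_sum_val. eapply has_sum_ext. 2: apply has_sum_scal with (c := /2); apply has_sum_plus; [exact Hpi1|exact HS2].
    intros; simpl; field. field. }
  set (w := fun i => ssum enum (fun j => P t i j * h j)).
  assert (Hw : forall i, has_sum enum (fun j => P t i j * h j) (w i)).
  { intros i. destruct (dominated_conv enum (fun j => P t i j * h j) (fun j => / pi i * ((pi j + pi j * h j ^ 2) / 2)) (/ pi i * ((1 + S2) / 2))) as [l Hl].
    - intros j. rewrite Rabs_mult, (Rabs_right (P t i j)) by (apply Rle_ge; auto).
      assert (HP : P t i j <= pi j / pi i).
      { assert (P t j i <= 1).
        { apply (term_le_has_sum enum idx (P t j) i 1 Hidx); auto. }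
        specialize (Hpp i). apply Rmult_le_reg_l with (pi i); auto.
        replace (pi i * (pi j / pi i)) with (pi j) by (field; lra).
        rewrite (Hrev t i j Ht). specialize (Hpinn j). nra. }
      specialize (Hdom (h j)). pose proof (Rabs_pos (h j)).
      replace (/ pi i * ((pi j + pi j * h j ^ 2) / 2)) with (pi j / pi i * ((1 + h j ^ 2) / 2)) by (field; specialize (Hpp i); lra).
      apply Rmult_le_compat; auto.
    - apply has_sum_scal; exact HG.
    - unfold w. rewrite (ssum_eq _ _ _ Hl). exact Hl. }
  set (e := exp (- eps * (t + t))).
  assert (Hlim : fs enum N (fun i => pi i * (w i - m) ^ 2) <= (S2 - m ^ 2) * e).
  { eapply Rle_cv_lim with (Un := fun n => fs enum N (fun i => pi i * (WW enum P n h t i - mm enum pi n h) ^ 2))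
      (Vn := fun n => (fs enum n (fun i => pi i * h i ^ 2) - mm enum pi n h ^ 2) * e).
    - intros n. unfold e. apply step_finite with (idx := idx) (f := f) (C := C); auto.
    - apply fs_cv with (u := fun n i => pi i * (WW enum P n h t i - mm enum pi n h) ^ 2). intros x.
      assert (H1 : Un_cv (fun n => WW enum P n h t x - mm enum pi n h) (w x - m)).
      { apply CV_minus. apply has_sum_cv, Hw. apply has_sum_cv, Hm. }
      replace (pi x * (w x - m) ^ 2) with (pi x * ((w x - m) * (w x - m))) by ring.
      eapply Un_cv_ext. 2: apply (CV_mult _ _ _ _ (CV_const (pi x)) (CV_mult _ _ _ _ H1 H1)).
      intros n; simpl; ring.
    - replace ((S2 - m ^ 2) * e) with ((S2 - m * m) * e) by ring.
      eapply Un_cv_ext. 2: { apply CV_mult. apply CV_minus. exact (proj1 (has_sum_cv _ _ _) HS2).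
        apply CV_mult; exact (proj1 (has_sum_cv _ _ _) Hm). apply CV_const. }
      intros n; simpl. unfold mm. ring.
  }
  assert (Hmm : ssum enum (fun j => pi j * f j * g j) = m).
  { apply ssum_eq. eapply has_sum_ext. 2: exact Hm. intros; unfold h; ring. }
  assert (HS2m : S2 - m ^ 2 <= c).
  { eapply sum_le_lim. 2: exact Hc.
    eapply has_sum_val. eapply has_sum_ext.
    2: { apply has_sum_plus. apply has_sum_minus. exact HS2. apply has_sum_scal with (c := 2 * m). exact Hm.
         apply has_sum_scal with (c := m ^ 2). exact Hpi1. }
    intros i; cbv beta. unfold pif, nu. rewrite Hmm. unfold h. field. apply Hfne. ring. }
  change (fs enum N (fun i => nu pi f i * (Pf enum P f t g i - pif enum pi f g i) ^ 2) <= c * exp (- eps * t) ^ 2).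
  replace (fs enum N (fun i => nu pi f i * (Pf enum P f t g i - pif enum pi f g i) ^ 2))
    with (fs enum N (fun i => pi i * (w i - m) ^ 2)).
  2: { apply fs_ext; intros i. unfold nu, Pf, pif. rewrite Hmm. unfold w, h. field. apply Hfne. }
  assert (Ee : e = exp (- eps * t) ^ 2).
  { unfold e. simpl. rewrite Rmult_1_r, <- exp_plus. f_equal; ring. }
  rewrite <- Ee. eapply Rle_trans. exact Hlim. apply Rmult_le_compat_r; auto. unfold e; left; apply exp_pos.
Qed.

Lemma single_lift {E} (enum : nat -> option E) idx F x0 k :
  idx_ok enum idx -> (forall x, x <> x0 -> F x = 0) ->
  lift enum F k = if (k =? idx x0)%nat then F x0 else 0.
Proof.
  intros [H1 H2] H. unfold lift. destruct (enum k) eqn:Ek.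
  - destruct (Nat.eqb_spec k (idx x0)).
    + subst. rewrite H1 in Ek. inversion Ek; auto.
    + apply H. intros ->. apply n. apply H2; auto.
  - destruct (Nat.eqb_spec k (idx x0)); auto. subst. rewrite H1 in Ek; discriminate.
Qed.

Lemma single_fs {E} (enum : nat -> option E) idx F x0 N :
  idx_ok enum idx -> (forall x, x <> x0 -> F x = 0) ->
  fs enum N F = if (idx x0 <=? N)%nat then F x0 else 0.
Proof.
  intros Hi H. unfold fs. induction N; simpl; rewrite (single_lift enum idx F x0) by auto.
  - destruct (Nat.eqb_spec 0 (idx x0)); destruct (Nat.leb_spec (idx x0) 0); auto; lia.
  - rewrite IHN. destruct (Nat.eqb_spec (S N) (idx x0)); destruct (Nat.leb_spec (idx x0) N);
      destruct (Nat.leb_spec (idx x0) (S N)); try lia; ring.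
Qed.

Lemma single_has_sum {E} (enum : nat -> option E) idx F x0 :
  idx_ok enum idx -> (forall x, x <> x0 -> F x = 0) -> has_sum enum F (F x0).
Proof.
  intros Hi H. replace (F x0) with (fs enum (idx x0) F).
  - apply has_sum_eventually_zero. intros k Hk. rewrite (single_lift enum idx F x0) by auto.
    destruct (Nat.eqb_spec k (idx x0)); auto; lia.
  - rewrite (single_fs enum idx F x0) by auto. rewrite Nat.leb_refl; auto.
Qed.

Lemma single_fs_le {E} (enum : nat -> option E) idx F x0 N :
  idx_ok enum idx -> (forall x, x <> x0 -> F x = 0) -> fs enum N F <= Rabs (F x0).
Proof.
  intros Hi H. rewrite (single_fs enum idx F x0) by auto. destruct (idx x0 <=? N)%nat.
  apply Rle_abs. apply Rabs_pos.
Qed.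

Lemma L2_to_erg {E} (enum : nat -> option E) idx P pi f sig :
  idx_ok enum idx -> positive_recurrent enum P pi -> reversible P pi -> (forall i, 1 <= f i) ->
  sum_finite enum (fun i => pi i * f i ^ 2) ->
  L2_rate enum P pi f sig -> f_ergodic_rate enum P pi f sig.
Proof.
  intros Hidx Hpr Hrev Hf [M HM] [Hsig HL].
  assert (Hpp : forall i, 0 < pi i) by (apply (pi_pos enum idx P pi Hidx); apply Hpr).
  destruct Hpr as [[Hnn [Hrow [_ [HCK _]]]] [Hirr [Hpinn [Hpi1 Hst]]]].
  assert (Hfne : forall i, f i <> 0) by (intros i; specialize (Hf i); lra).
  split; auto. exists (fun i => (M + (2 / pi i + 2)) / 2). intros i0 t Ht N.
  set (g := fun k => if excluded_middle_informative (k = i0) then / (pi i0 * f i0) else 0).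
  assert (Hg0 : forall k, k <> i0 -> g k = 0).
  { intros k Hk. unfold g. destruct (excluded_middle_informative (k = i0)); auto; contradiction. }
  assert (Hgi : g i0 = / (pi i0 * f i0)).
  { unfold g. destruct (excluded_middle_informative (i0 = i0)); auto; contradiction. }
  assert (Hpi0 := Hpp i0). assert (Hf0 := Hfne i0).
  assert (Hm : ssum enum (fun j => pi j * f j * g j) = 1).
  { apply ssum_eq. eapply has_sum_val. apply (single_has_sum enum idx _ i0 Hidx).
    intros x Hx; rewrite Hg0; auto; ring. cbv beta. rewrite Hgi. field; repeat split; try lra; auto. }
  assert (Hpif : forall k, pif enum pi f g k = / f k).
  { intros k. unfold pif. rewrite Hm. ring. }
  assert (HPf : forall k, Pf enum P f t g k = / f k * (P t k i0 / pi i0)).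
  { intros k. unfold Pf. f_equal. apply ssum_eq. eapply has_sum_val. apply (single_has_sum enum idx _ i0 Hidx).
    intros x Hx; rewrite Hg0; auto; ring. cbv beta. rewrite Hgi. field; repeat split; try lra; auto. }
  set (c := 2 / pi i0 + 2).
  assert (HL2 : in_L2 enum pi f g).
  { exists (Rabs (nu pi f i0 * g i0 ^ 2)). intros n.
    apply (single_fs_le enum idx (fun i => nu pi f i * g i ^ 2) i0 n Hidx).
    intros x Hx; rewrite Hg0; auto; ring. }
  assert (Hc : sum_le enum (fun i => nu pi f i * (g i - pif enum pi f g i) ^ 2) c).
  { intros n. change (fs enum n (fun i => nu pi f i * (g i - pif enum pi f g i) ^ 2) <= c).
    eapply Rle_trans. apply fs_le with (G := fun i => 2 * (pi i * f i ^ 2 * g i ^ 2) + 2 * pi i).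
    { intros i. rewrite Hpif. unfold nu.
      replace (f i ^ 2 * pi i * (g i - / f i) ^ 2) with (pi i * (f i * g i - 1) ^ 2) by (field; auto).
      specialize (Hpinn i). pose proof (pow2_ge_0 (f i * g i + 1)). nra. }
    rewrite fs_plus, !fs_scal. unfold c.
    assert (fs enum n (fun i => pi i * f i ^ 2 * g i ^ 2) <= / pi i0).
    { eapply Rle_trans. apply (single_fs_le enum idx _ i0 n Hidx). intros x Hx; rewrite Hg0; auto; ring.
      cbv beta. rewrite Hgi. rewrite Rabs_right. right; field; repeat split; try lra; auto.
      apply Rle_ge. apply Rmult_le_pos. apply Rmult_le_pos; auto. apply pow2_ge_0. apply pow2_ge_0. }
    assert (fs enum n pi <= 1) by (apply partial_le; auto).
    unfold Rdiv. lra. }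
  specialize (HL t g Ht HL2 c Hc).
  set (l := exp (- sig * t)).
  assert (Hl : 0 < l) by apply exp_pos.
  change (fs enum N (fun j => f j * Rabs (P t i0 j - pi j)) <= (M + (2 / pi i0 + 2)) / 2 * exp (- sig * t)).
  fold l. fold c.
  eapply Rle_trans. apply fs_le with (G := fun k => (l * (pi k * f k ^ 2) + / l * (nu pi f k * (Pf enum P f t g k - pif enum pi f g k) ^ 2)) / 2).
  { intros k. rewrite HPf, Hpif. unfold nu.
    assert (Hpk := Hpp k). assert (Hfk := Hfne k).
    replace (f k ^ 2 * pi k * (/ f k * (P t k i0 / pi i0) - / f k) ^ 2) with ((P t i0 k - pi k) ^ 2 / pi k).
    2: { assert (P t k i0 = pi i0 * P t i0 k / pi k).
         { pose proof (Hrev t i0 k Ht). field_simplify; try lra. rewrite H. field. lra. }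
         rewrite H. field. lra. }
    set (d := P t i0 k - pi k).
    assert (Hdd : Rabs d ^ 2 = d ^ 2) by (rewrite <- (pow2_abs d); auto).
    pose proof (Rabs_pos d). pose proof (pow2_ge_0 (l * pi k * f k - Rabs d)).
    apply Rmult_le_reg_r with (2 * l * pi k). apply Rmult_lt_0_compat; lra.
    replace ((l * (pi k * f k ^ 2) + / l * (d ^ 2 / pi k)) / 2 * (2 * l * pi k)) with (l * l * pi k * pi k * f k ^ 2 + d ^ 2) by (field; lra).
    nra. }
  rewrite (fs_ext enum N _ (fun k => / 2 * (l * (pi k * f k ^ 2)) + / 2 * / l * (nu pi f k * (Pf enum P f t g k - pif enum pi f g k) ^ 2)))
    by (intros; field; lra).
  rewrite fs_plus, !fs_scal.
  pose proof (HM N) as HM1. pose proof (HL N) as HL1.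
  change (sum_f_R0 (lift enum (fun i : E => pi i * f i ^ 2)) N) with (fs enum N (fun i : E => pi i * f i ^ 2)) in HM1.
  change (sum_f_R0 (lift enum (fun i => nu pi f i * (Pf enum P f t g i - pif enum pi f g i) ^ 2)) N)
    with (fs enum N (fun i => nu pi f i * (Pf enum P f t g i - pif enum pi f g i) ^ 2)) in HL1.
  fold l in HL1.
  assert (/ 2 * / l * fs enum N (fun k => nu pi f k * (Pf enum P f t g k - pif enum pi f g k) ^ 2) <= / 2 * / l * (c * l ^ 2)).
  { apply Rmult_le_compat_l; auto. left. apply Rmult_lt_0_compat. lra. apply Rinv_0_lt_compat; auto. }
  replace (/ 2 * / l * (c * l ^ 2)) with (/ 2 * c * l) in H by (field; lra).
  assert (/ 2 * (l * fs enum N (fun i => pi i * f i ^ 2)) <= / 2 * (l * M)).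
  { apply Rmult_le_compat_l. lra. apply Rmult_le_compat_l; lra. }
  lra.
Qed.

Theorem theorem3p3 (E : Type) (enum : nat -> option E) (Henum : enumerates enum)
  (P : R -> E -> E -> R) (pi : E -> R)
  (Hpr : positive_recurrent enum P pi) (Hrev : reversible P pi)
  (f : E -> R) (Hf1 : forall i, 1 <= f i)
  (Hf2 : sum_finite enum (fun i => pi i * f i ^ 2)) :
  (exp_f_ergodic enum P pi f <-> L2_exp_conv enum P pi f) /\
  (* eps_max = sigma_max, as suprema in (0, +oo]: same upper bounds *)
  (forall x : R,
     is_upper_bound (fun e => f_ergodic_rate enum P pi f e) x <->
     is_upper_bound (fun s => L2_rate enum P pi f s) x).
Proof.
  destruct (idx_exists enum Henum) as [idx Hidx].
  split.
  - split.
    + intros [e He]. exists e. apply (erg_to_L2 enum idx); auto.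
    + intros [s Hs]. exists s. apply (L2_to_erg enum idx); auto.
  - intros x; split; intros Hub y Hy; apply Hub.
    + apply (L2_to_erg enum idx); auto.
    + apply (erg_to_L2 enum idx); auto.
Qed.
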